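(* Assume $\Sigma_n$ and $V_n$ are invertible and set $\mathcal{D}_n^{\Sigma} := \|\Sigma_n^{-1/2}\widehat{\Sigma}_n\Sigma_n^{-1/2} - I_d\|_{\mathrm{op}}$. If $\mathcal{D}_n^{\Sigma} < 1$, then (deterministically) \[ \Big\|\widehat{\beta} - \beta - \frac{1}{n}\sum_{i=1}^n \psi_i \Big\|_{\Sigma_n V^{-1}_n\Sigma_n} \le \kappa(\Sigma_n^{-1/2}V_n^{1/2})\frac{\mathcal{D}_n^{\Sigma}}{1 - \mathcal{D}_n^{\Sigma}}\Big\|\frac{1}{n}\sum_{i=1}^n \psi_i \Big\|_{\Sigma_n V^{-1}_n\Sigma_n}, \] where $\psi_i := \Sigma^{-1}_nX_i(Y_i - X_i^{\top}\beta)\in\mathbb{R}^d$, $i=1,\dots,n$.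
   Context: Let $(X_1,Y_1),\dots,(X_n,Y_n)$ be random elements of $\mathbb{R}^d\times\mathbb{R}$ (not necessarily independent or identically distributed) with finite second moments. Define $\Sigma_n := n^{-1}\sum_{i=1}^n\mathbb{E}[X_iX_i^\top]$, $\Gamma_n := n^{-1}\sum_{i=1}^n\mathbb{E}[X_iY_i]$, the projection parameter $\beta := \Sigma_n^{-1}\Gamma_n$, $\widehat{\Sigma}_n := n^{-1}\sum_{i=1}^n X_iX_i^\top$, $\widehat{\Gamma}_n := n^{-1}\sum_{i=1}^n X_iY_i$, and the OLS estimator $\widehat\beta := \widehat{\Sigma}_n^{-1}\widehat{\Gamma}_n$ (well defined when $\widehat\Sigma_n$ is invertible). Let $V_n := \mathrm{Var}\big(n^{-1}\sum_{i=1}^n X_i(Y_i - X_i^\top\beta)\big)$. For a positive definite $A$ and $x\in\mathbb{R}^d$, $\|x\|_A := \sqrt{x^\top A x}$; for a nonsingular matrix $A$, $\kappa(A) := \|A^{-1}\|_{\mathrm{op}}\|A\|_{\mathrm{op}}$, where $\|\cdot\|_{\mathrm{op}}$ is the operator norm. *)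

(* Defs.v *)
From HB Require Import structures.
From mathcomp Require Import all_boot all_order all_algebra.
From mathcomp Require Import all_classical all_reals all_analysis.
Set Implicit Arguments. Unset Strict Implicit. Unset Printing Implicit Defensive.
Import Order.TTheory GRing.Theory Num.Theory.
Local Open Scope ring_scope.
Local Open Scope classical_set_scope.

Section LinAlg.
Variable R : realType.

Definition eucl (m : nat) (x : 'cV[R]_m) : R := Num.sqrt (\sum_i x i 0 ^+ 2).

Definition opnorm (m k : nat) (A : 'M[R]_(m, k)) : R :=
  sup [set eucl (A *m x) | x in [set x : 'cV[R]_k | eucl x = 1]].

Definition kappa (m : nat) (A : 'M[R]_m) : R := opnorm (invmx A) * opnorm A.

Definition psdmx (m : nat) (S : 'M[R]_m) : Prop :=
  S^T = S /\ forall x : 'cV[R]_m, 0 <= (x^T *m S *m x) 0 0.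

Definition msqrt (m : nat) (A : 'M[R]_m) : 'M[R]_m :=
  xget 0 [set S : 'M[R]_m | psdmx S /\ S *m S = A].

Definition minvsqrt (m : nat) (A : 'M[R]_m) : 'M[R]_m := invmx (msqrt A).

Definition anorm (m : nat) (A : 'M[R]_m) (x : 'cV[R]_m) : R :=
  Num.sqrt ((x^T *m A *m x) 0 0).

End LinAlg.

Section Regression.
Context {dT : measure_display} {T : measurableType dT} {R : realType}.
Variable P : probability T R.
Variables (n dim : nat).
Variables (X : 'I_n -> T -> 'cV[R]_dim) (Y : 'I_n -> T -> R).

Definition Ex (f : T -> R) : R := fine ('E_P[f])%E.

Definition Sigma_n : 'M[R]_dim :=
  n%:R^-1 *: \sum_(i < n) \matrix_(j, k) Ex (fun w => X i w j 0 * X i w k 0).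

Definition Gamma_n : 'cV[R]_dim :=
  n%:R^-1 *: \sum_(i < n) \col_j Ex (fun w => X i w j 0 * Y i w).

Definition beta_proj : 'cV[R]_dim := invmx Sigma_n *m Gamma_n.

Definition Sigma_hat (w : T) : 'M[R]_dim :=
  n%:R^-1 *: \sum_(i < n) (X i w *m (X i w)^T).

Definition Gamma_hat (w : T) : 'cV[R]_dim :=
  n%:R^-1 *: \sum_(i < n) (Y i w *: X i w).

Definition beta_hat (w : T) : 'cV[R]_dim := invmx (Sigma_hat w) *m Gamma_hat w.

Definition resid (i : 'I_n) (w : T) : R := Y i w - ((X i w)^T *m beta_proj) 0 0.

Definition Zbar (w : T) : 'cV[R]_dim :=
  n%:R^-1 *: \sum_(i < n) (resid i w *: X i w).

Definition V_n : 'M[R]_dim :=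
  \matrix_(j, k) (Ex (fun w => Zbar w j 0 * Zbar w k 0)
                  - Ex (fun w => Zbar w j 0) * Ex (fun w => Zbar w k 0)).

Definition psi (i : 'I_n) (w : T) : 'cV[R]_dim :=
  resid i w *: (invmx Sigma_n *m X i w).

Definition psibar (w : T) : 'cV[R]_dim := n%:R^-1 *: \sum_(i < n) psi i w.

Definition DSigma (w : T) : R :=
  opnorm (minvsqrt Sigma_n *m Sigma_hat w *m minvsqrt Sigma_n - 1%:M).

End Regression.

(* Main.v *)
Require Import Defs.
From HB Require Import structures.
From mathcomp Require Import all_boot all_order all_algebra.
From mathcomp Require Import all_classical all_reals all_analysis.
From mathcomp Require Import ring lra.
Import Order.TTheory GRing.Theory Num.Theory.
Set Implicit Arguments. Unset Strict Implicit. Unset Printing Implicit Defensive.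
Local Open Scope ring_scope.



Lemma interp_poly (F : fieldType) (s : seq F) (f : F -> F) :
  exists p : {poly F}, forall x, x \in s -> p.[x] = f x.
Proof.
elim: s => [|y s [p Hp]]; first by exists 0.
have [ys|yns] := boolP (y \in s).
  by exists p => x; rewrite inE => /orP[/eqP->|/Hp//]; exact: Hp.
pose q := \prod_(z <- s) ('X - z%:P).
have qy : q.[y] != 0.
  rewrite /q horner_prod prodf_seq_neq0; apply/allP => z zs /=.
  by rewrite hornerXsubC subr_eq0; apply: contraNneq yns => ->.
exists (p + ((f y - p.[y]) / q.[y]) *: q) => x; rewrite inE hornerD hornerZ.
case/orP=> [/eqP->|xs]; first by rewrite mulfVK // addrC subrK.
have -> : q.[x] = 0.
  apply/eqP; rewrite /q horner_prod prodf_seq_eq0; apply/hasP; exists x => //.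
  by rewrite hornerXsubC subrr eqxx.
by rewrite mulr0 addr0 Hp.
Qed.

Lemma horner_mx_tr (F : comNzRingType) n (A : 'M[F]_n.+1) p :
  (horner_mx A p)^T = horner_mx A^T p.
Proof.
elim/poly_ind: p => [|p c IH]; first by rewrite !rmorph0 trmx0.
rewrite !(rmorphD, rmorphM) /= !(horner_mx_X, horner_mx_C) linearD /= tr_scalar_mx.
congr (_ + _); rewrite -IH.
have := comm_horner_mx2 A p 'X; rewrite horner_mx_X => ->.
by rewrite [LHS]trmx_mul.
Qed.

Module SqrtM.
From mathcomp Require Import complex.
Section S.
Variable R : realType.
Local Notation C := (R[i]).
Local Notation toC := (real_complex R).

Lemma test n (A : 'M[R]_n.+1) : A^T = A -> map_mx toC A \is hermsymmx.
Proof.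
move=> AT; apply/is_hermitianmxP; rewrite expr0 scale1r.
apply/matrixP => i j; rewrite !mxE.
have := congr1 (fun M : 'M[R]_n.+1 => M j i) AT; rewrite mxE => <-.
exact/esym/conjc_real.
Qed.

Lemma ReMr (z : C) (x : R) : Re (z * toC x) = Re z * x.
Proof. by case: z => a b /=; rewrite !mulr0 subr0. Qed.
Lemma ImMr (z : C) (x : R) : Im (z * toC x) = Im z * x.
Proof. by case: z => a b /=; rewrite !mulr0 add0r. Qed.
Lemma ReMl (z : C) (x : R) : Re (toC x * z) = x * Re z.
Proof. by case: z => a b /=; rewrite !mul0r subr0. Qed.
Lemma ImMl (z : C) (x : R) : Im (toC x * z) = x * Im z.
Proof. by case: z => a b /=; rewrite !mul0r addr0. Qed.
Lemma Re_sum (I : Type) (r : seq I) (F : I -> C) :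
  Re (\sum_(i <- r) F i) = \sum_(i <- r) Re (F i).
Proof.
elim: r => [|x r IH]; rewrite ?big_nil ?big_cons //.
by rewrite -IH; case: (F x) => ? ?; case: (\sum_(j <- r) F j).
Qed.
Lemma Im_sum (I : Type) (r : seq I) (F : I -> C) :
  Im (\sum_(i <- r) F i) = \sum_(i <- r) Im (F i).
Proof.
elim: r => [|x r IH]; rewrite ?big_nil ?big_cons //.
by rewrite -IH; case: (F x) => ? ?; case: (\sum_(j <- r) F j).
Qed.


Lemma sqrt_exists n (A : 'M[R]_n.+1) :
  A^T = A -> (forall x : 'cV[R]_n.+1, 0 <= (x^T *m A *m x) 0 0) ->
  exists S : 'M[R]_n.+1, [/\ S^T = S,
    (forall x : 'cV[R]_n.+1, 0 <= (x^T *m S *m x) 0 0) & S *m S = A].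
Proof.
move=> AT Apsd.
pose Ac := map_mx toC A.
have Aherm : Ac \is hermsymmx := @test n A AT.
have Pu : spectralmx Ac \is unitarymx := spectral_unitarymx Ac.
have dR := hermitian_spectral_diag_real Aherm.
have /orthomx_spectralP eqA := hermitian_normalmx Aherm.
move: Pu dR eqA; set P := spectralmx Ac; set d := spectral_diag Ac.
clearbody P d => Pu dR eqA.
have Punit : P \in unitmx := unitarymx_unit Pu.
pose r k := Re (d 0 k).
have dk k : d 0 k = toC (r k) by rewrite RRe_real //; exact: (mxOverP dR).
have PA : P *m Ac = diag_mx d *m P by rewrite eqA !mulmxA (mulmxV Punit) mul1mx.
have r_ge0 k : 0 <= r k.
  pose u := row k P.
  have uA : u *m Ac = d 0 k *: u.
    rewrite /u -row_mul PA mul_diag_mx; apply/rowP => j; rewrite !mxE.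
    by [].
  pose a := map_mx (@Re R) u; pose b := map_mx (@Im R) u.
  have aA : a *m A = r k *: a.
    apply/rowP => j; have := congr1 (fun M : 'rV_n.+1 => Re (M 0 j)) uA.
    rewrite /= !mxE Re_sum dk ReMl => <-; apply: eq_bigr => i _.
    by rewrite !mxE ReMr.
  have bA : b *m A = r k *: b.
    apply/rowP => j; have := congr1 (fun M : 'rV_n.+1 => Im (M 0 j)) uA.
    rewrite /= !mxE Im_sum dk ImMl => <-; apply: eq_bigr => i _.
    by rewrite !mxE ImMr.
  have qa := Apsd a^T; have qb := Apsd b^T.
  rewrite trmxK aA -scalemxAl mxE in qa.
  rewrite trmxK bA -scalemxAl mxE in qb.
  have pos : 0 < (a *m a^T) 0 0 + (b *m b^T) 0 0.
    rewrite !mxE -big_split /= lt_def; apply/andP; split; last first.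
      by apply: sumr_ge0 => j _; rewrite !mxE addr_ge0 // -expr2 sqr_ge0.
    apply/negP => /eqP/psumr_eq0P H.
    have nn : forall j, true -> 0 <= a 0 j * a^T j 0 + b 0 j * b^T j 0.
      by move=> j _; rewrite !mxE -!expr2 addr_ge0 ?sqr_ge0.
    have {}H := H nn.
    have : u *m invmx P = 0.
      apply/rowP => j; rewrite !mxE; apply: big1 => i _.
      have := H i isT; rewrite !mxE -!expr2.
      move/eqP; rewrite paddr_eq0 ?sqr_ge0 // !sqrf_eq0 => /andP[/eqP ha /eqP hb].
      suff -> : P k i = 0 by rewrite mul0r.
      by move: ha hb; rewrite /a /b /u; case: (P k i) => x y /= -> ->.
    rewrite /u -row_mul mulmxV // => /rowP/(_ k); rewrite !mxE eqxx /=.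
    by move/eqP; rewrite oner_eq0.
  have : 0 <= r k * ((a *m a^T) 0 0 + (b *m b^T) 0 0).
    by rewrite mulrDr addr_ge0.
  by rewrite pmulr_lge0.
have [p Hp] := @interp_poly R [seq r k | k <- enum 'I_n.+1] (@Num.sqrt R).
have pk k : p.[r k] = Num.sqrt (r k) by apply: Hp; apply: map_f; rewrite mem_enum.
pose S := horner_mx A p.
pose s := \row_k toC (Num.sqrt (r k)).
have mapS : map_mx toC S = invmx P *m diag_mx s *m P.
  rewrite map_horner_mx -/Ac eqA.
  have := @horner_mx_uconjC C n (map_poly toC p) P (diag_mx d) Punit.
  move=> ->; rewrite horner_mx_diag.
  apply: (congr1 (fun v : 'rV[C]_n.+1 => invmx P *m diag_mx v *m P)).
  apply/rowP => j; rewrite !mxE dk horner_map.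
  by rewrite pk.
exists S; split.
- by rewrite /S horner_mx_tr AT.
- move=> x; rewrite -ler0c.
  have -> : toC ((x^T *m S *m x) 0 0) = (map_mx toC (x^T *m S *m x)) 0 0.
    by rewrite [RHS]mxE.
  rewrite !map_mxM mapS invmx_unitary //.
  pose y := P *m map_mx toC x.
  rewrite !mulmxA.
  have -> : (map_mx toC x^T *m (P ^t*)%sesqui) = (y ^t*)%sesqui.
    rewrite /y trmx_mul map_mxM; congr (_ *m _).
    apply/matrixP => i j; rewrite !mxE; exact/esym/conjc_real.
  rewrite -mulmxA -/y mul_mx_diag mxE; apply: sumr_ge0 => k _.
  rewrite !mxE mulrAC; apply: mulr_ge0; first by rewrite mulrC mul_conjC_ge0.
  by rewrite ler0c sqrtr_ge0.
- apply: (@map_mx_inj _ _ toC); rewrite map_mxM mapS.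
  rewrite !mulmxA (mulmxK Punit) -[invmx P *m _ *m _]mulmxA mulmx_diag.
  have -> : map_mx toC A = invmx P *m diag_mx d *m P by exact: eqA.
  apply: (congr1 (fun v : 'rV[C]_n.+1 => invmx P *m diag_mx v *m P)).
  apply/rowP => j; rewrite !mxE dk -rmorphM -expr2 sqr_sqrtr //.
Qed.

End S.
End SqrtM.


Section Eucl.
Variable R : realType.

Definition es (m : nat) (x : 'cV[R]_m) := \sum_i x i 0 ^+ 2.

Lemma es_ge0 m (x : 'cV[R]_m) : 0 <= es x.
Proof. by apply: sumr_ge0 => i _; rewrite sqr_ge0. Qed.

Lemma euclE m (x : 'cV[R]_m) : eucl x = Num.sqrt (es x).
Proof. by []. Qed.

Lemma eucl_ge0 m (x : 'cV[R]_m) : 0 <= eucl x.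
Proof. exact: sqrtr_ge0. Qed.

Lemma eucl2 m (x : 'cV[R]_m) : eucl x ^+ 2 = es x.
Proof. by rewrite euclE sqr_sqrtr // es_ge0. Qed.

Lemma esZ m (c : R) (x : 'cV[R]_m) : es (c *: x) = c ^+ 2 * es x.
Proof. by rewrite /es mulr_sumr; apply: eq_bigr => i _; rewrite mxE exprMn. Qed.

Lemma euclZ m (c : R) (x : 'cV[R]_m) : eucl (c *: x) = `|c| * eucl x.
Proof. by rewrite !euclE esZ sqrtrM ?sqr_ge0 // sqrtr_sqr. Qed.

Lemma eucl0 m : eucl (0 : 'cV[R]_m) = 0.
Proof. by rewrite -(scale0r (0 : 'cV[R]_m)) euclZ normr0 mul0r. Qed.

Lemma euclN m (x : 'cV[R]_m) : eucl (- x) = eucl x.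
Proof. by rewrite -scaleN1r euclZ normrN normr1 mul1r. Qed.

Lemma eucl_eq0 m (x : 'cV[R]_m) : eucl x = 0 -> x = 0.
Proof.
move/eqP; rewrite euclE sqrtr_eq0 => H.
have H0 : es x = 0 by apply/eqP; rewrite eq_le H es_ge0.
apply/matrixP => i j; rewrite ord1 mxE.
move/psumr_eq0P: H0 => /(_ (fun i _ => sqr_ge0 _)) /(_ i isT) /eqP.
by rewrite sqrf_eq0 => /eqP.
Qed.

Lemma eucl_gt0 m (x : 'cV[R]_m) : x != 0 -> 0 < eucl x.
Proof.
move=> x0; rewrite lt_def eucl_ge0 andbT; apply/eqP => /eucl_eq0 /eqP.
by rewrite (negPf x0).
Qed.

Definition dot m (u v : 'cV[R]_m) := \sum_i u i 0 * v i 0.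

Lemma CS m (u v : 'cV[R]_m) : dot u v ^+ 2 <= es u * es v.
Proof.
have [u0|] := eqVneq (es u) 0.
  have -> : dot u v = 0.
    rewrite /dot; apply: big1 => i _.
    move/psumr_eq0P: u0 => /(_ (fun i _ => sqr_ge0 _)) /(_ i isT) /eqP.
    by rewrite sqrf_eq0 => /eqP ->; rewrite mul0r.
  by rewrite u0 mul0r expr0n.
move=> un0; have ug : 0 < es u by rewrite lt_def un0 es_ge0.
pose t := dot u v / es u.
have : 0 <= \sum_i (t * u i 0 - v i 0) ^+ 2 by apply: sumr_ge0 => i _; rewrite sqr_ge0.
have -> : \sum_i (t * u i 0 - v i 0) ^+ 2 = t ^+ 2 * es u - 2 * t * dot u v + es v.
  rewrite /es /dot mulr_sumr mulr_sumr -sumrB -big_split /=; apply: eq_bigr => i _.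
  by rewrite sqrrB exprMn; ring.
rewrite /t => H.
have : 0 <= es v - dot u v ^+ 2 / es u.
  move: H; congr (_ <= _); field; exact: un0.
rewrite subr_ge0 ler_pdivrMr // => H2.
by rewrite mulrC.
Qed.

Lemma eucl_triangle m (u v : 'cV[R]_m) : eucl (u + v) <= eucl u + eucl v.
Proof.
rewrite -(ler_pXn2r (_ : 0 < 2)%N) ?nnegrE ?addr_ge0 ?eucl_ge0 //.
rewrite sqrrD !eucl2.
have -> : es (u + v) = es u + 2 * dot u v + es v.
  rewrite /es /dot mulr_sumr -!big_split /=; apply: eq_bigr => i _.
  by rewrite mxE sqrrD; ring.
suff : dot u v <= eucl u * eucl v by rewrite mulr2n; lra.
have : `|dot u v| ^+ 2 <= (eucl u * eucl v) ^+ 2.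
  by rewrite exprMn !eucl2 real_normK ?num_real // CS.
rewrite ler_pXn2r ?nnegrE ?mulr_ge0 ?eucl_ge0 // => H.
exact: le_trans (ler_norm _) H.
Qed.


Lemma coord_le1 m (y : 'cV[R]_m) j : eucl y = 1 -> `|y j 0| <= 1.
Proof.
move=> y1; have : y j 0 ^+ 2 <= es y.
  rewrite /es (bigD1 j) //= lerDl; apply: sumr_ge0 => i _; exact: sqr_ge0.
rewrite -eucl2 y1 expr1n -real_normK ?num_real // expr_le1 //.
Qed.

Lemma opnorm_ubound m k (A : 'M[R]_(m, k)) :
  has_ubound [set eucl (A *m x) | x in [set x : 'cV[R]_k | eucl x = 1]].
Proof.
pose c i := \sum_j `|A i j|.
exists (Num.sqrt (\sum_i c i ^+ 2)) => _ [y /= y1 <-].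
rewrite euclE ler_sqrt; last by apply: sumr_ge0 => i _; exact: sqr_ge0.
apply: ler_sum => i _; rewrite -real_normK ?num_real //.
rewrite ler_sqr ?nnegrE ?normr_ge0 ?sumr_ge0 // mxE.
apply: le_trans (ler_norm_sum _ _ _) _; apply: ler_sum => j _.
by rewrite normrM ler_piMr // coord_le1.
Qed.

Lemma opnorm_ub m k (A : 'M[R]_(m, k)) x : eucl x = 1 -> eucl (A *m x) <= opnorm A.
Proof.
move=> x1; apply: sup_upper_bound; last by exists x.
split; [by exists (eucl (A *m x)), x | exact: opnorm_ubound].
Qed.

Lemma opnorm_bound m k (A : 'M[R]_(m, k)) x : eucl (A *m x) <= opnorm A * eucl x.
Proof.
have [->|x0] := eqVneq x 0; first by rewrite mulmx0 !eucl0 mulr0.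
have xg := eucl_gt0 x0.
have := opnorm_ub A (_ : eucl ((eucl x)^-1 *: x) = 1).
rewrite euclZ ger0_norm ?invr_ge0 ?eucl_ge0 // mulVf ?gt_eqF // => /(_ erefl).
rewrite -scalemxAr euclZ ger0_norm ?invr_ge0 ?eucl_ge0 // ler_pdivrMl //.
by rewrite mulrC.
Qed.

Lemma opnorm_ge0 m k (A : 'M[R]_(m, k.+1)) : 0 <= opnorm A.
Proof.
pose x : 'cV[R]_k.+1 := const_mx 1.
have x0 : x != 0 by apply/eqP => /matrixP/(_ 0 0); rewrite !mxE => /eqP; rewrite oner_eq0.
have := opnorm_bound A x; have := eucl_gt0 x0; have := eucl_ge0 (A *m x).
move=> h1 h2 h3; have : 0 <= opnorm A * eucl x := le_trans h1 h3.
by rewrite pmulr_lge0.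
Qed.


Lemma nonunit_ker n (M : 'M[R]_n) : M \notin unitmx -> exists2 x : 'cV[R]_n, x != 0 & M *m x = 0.
Proof.
move=> Mu.
have K0 : kermx M^T != 0 by rewrite kermx_eq0 row_free_unit unitmx_tr.
have [i Ki] : exists i, row i (kermx M^T) != 0.
  apply/existsP; apply: contraR K0 => /existsPn H; apply/eqP/row_matrixP => i.
  by rewrite row0; apply/eqP; exact: negbNE (H i).
exists (row i (kermx M^T))^T; first by apply: contra Ki => /eqP/(congr1 trmx); rewrite trmxK trmx0 => ->.
apply: trmx_inj; rewrite trmx_mul trmxK -row_mul mulmx_ker row0 trmx0 //.
Qed.

Lemma inv_bound n (M : 'M[R]_n.+1) : opnorm (M - 1%:M) < 1 ->
  M \in unitmx /\ forall y, eucl ((invmx M - 1%:M) *m y)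
      <= opnorm (M - 1%:M) / (1 - opnorm (M - 1%:M)) * eucl y.
Proof.
set D := opnorm _ => D1.
have D0 : 0 <= D := opnorm_ge0 _.
have key x : (1 - D) * eucl x <= eucl (M *m x).
  have h1 : eucl x <= eucl (M *m x) + eucl ((M - 1%:M) *m x).
    have := eucl_triangle (M *m x) (- ((M - 1%:M) *m x)); rewrite euclN.
    have -> // : M *m x + - ((M - 1%:M) *m x) = x.
    by rewrite mulmxBl mul1mx opprB addrC subrK.
  have h2 := opnorm_bound (M - 1%:M) x; rewrite -/D in h2.
  rewrite mulrBl mul1r; lra.
have Mu : M \in unitmx.
  apply/negPn/negP => /nonunit_ker [x x0 Mx].
  have := key x; rewrite Mx eucl0 => h; have h' := eucl_gt0 x0; nra.
split => // y.
pose x := invmx M *m y.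
have Mx : M *m x = y by rewrite mulmxA mulmxV // mul1mx.
have -> : (invmx M - 1%:M) *m y = - ((M - 1%:M) *m x).
  by rewrite mulmxBl mul1mx -/x mulmxBl mul1mx Mx opprB.
rewrite euclN; apply: le_trans (opnorm_bound _ _) _; rewrite -/D.
have := key x; rewrite Mx => h.
have D1' : 0 < 1 - D by lra.
have exle : eucl x <= eucl y / (1 - D) by rewrite ler_pdivlMr // mulrC.
apply: le_trans (ler_wpM2l D0 exle) _; rewrite mulrA.
by rewrite mulrAC.
Qed.

End Eucl.


Section Cov.
Context {d : measure_display} {T : measurableType d} {R : realType}.
Variable P : probability T R.

Definition cv (F G : T -> R) : R := fine (covariance P F G).

Let Pfin : P setT \is a fin_num. Proof. exact: fin_num_measure. Qed.

Lemma cv_fin F G : F \in Lfun P 2%:E -> G \in Lfun P 2%:E ->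
  covariance P F G \is a fin_num.
Proof.
move=> F2 G2; apply: covariance_fin_num; try exact: Lfun_subset12.
exact: Lfun2_mul_Lfun1.
Qed.

Lemma cvE F G : F \in Lfun P 2%:E -> G \in Lfun P 2%:E ->
  cv F G = Ex P (fun w => F w * G w) - Ex P F * Ex P G.
Proof.
move=> F2 G2; rewrite /cv covarianceE; try exact: Lfun_subset12;
  last exact: Lfun2_mul_Lfun1.
have e1 := expectation_fin_num (Lfun_subset12 Pfin F2).
have e2 := expectation_fin_num (Lfun_subset12 Pfin G2).
have e3 := expectation_fin_num (Lfun2_mul_Lfun1 F2 G2).
by rewrite fineB ?fin_numM // fineM.
Qed.

Lemma cvDl F G H : F \in Lfun P 2%:E -> G \in Lfun P 2%:E -> H \in Lfun P 2%:E ->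
  cv (F + G) H = cv F H + cv G H.
Proof.
move=> F2 G2 H2; rewrite /cv covarianceDl // fineD //; exact: cv_fin.
Qed.

Lemma cvZl a F G : F \in Lfun P 2%:E -> G \in Lfun P 2%:E ->
  cv (a \o* F) G = a * cv F G.
Proof.
move=> F2 G2; rewrite /cv covarianceZl; try exact: Lfun_subset12;
  last exact: Lfun2_mul_Lfun1.
by rewrite fineM // cv_fin.
Qed.

Lemma cvC F G : cv F G = cv G F.
Proof. by rewrite /cv covarianceC. Qed.

Lemma cv0l G : cv 0 G = 0.
Proof.
have -> : (0 : T -> R) = cst 0.
  by apply/funext => x; reflexivity.
by rewrite /cv covariance_cst_l.
Qed.

Lemma cv_suml (I : Type) (r : seq I) (F : I -> T -> R) G :
  (forall i, F i \in Lfun P 2%:E) -> G \in Lfun P 2%:E ->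
  cv (\sum_(i <- r) F i) G = \sum_(i <- r) cv (F i) G.
Proof.
move=> F2 G2; elim: r => [|i r IH]; first by rewrite !big_nil cv0l.
rewrite !big_cons cvDl ?IH ?F2 //; apply: rpred_sum; [by rewrite lee_fin; lra | move=> h j _; exact: F2].
Qed.

Lemma cv_ge0 F : 0 <= cv F F.
Proof. exact/fine_ge0/variance_ge0. Qed.


Lemma covmx_psd m (Z : 'I_m -> T -> R) : (forall j, Z j \in Lfun P 2%:E) ->
  let V := \matrix_(j, k) (Ex P (fun w => Z j w * Z k w) - Ex P (Z j) * Ex P (Z k)) in
  V^T = V /\ forall x : 'cV[R]_m, 0 <= (x^T *m V *m x) 0 0.
Proof.
move=> Z2 V.
have VE j k : V j k = cv (Z j) (Z k) by rewrite mxE cvE.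
split.
  by apply/matrixP => j k; rewrite mxE !VE cvC.
move=> x.
pose f := \sum_(j < m) (x j 0 \o* Z j).
have f2 : f \in Lfun P 2%:E.
  apply: rpred_sum; [by rewrite lee_fin; lra | move=> h j _].
  by apply: (Lfun_scale _ (_ : 1 <= 2)) => //; lra.
suff -> : (x^T *m V *m x) 0 0 = cv f f by exact: cv_ge0.
have Zs j : x j 0 \o* Z j \in Lfun P 2%:E.
  by apply: (Lfun_scale _ (_ : 1 <= 2)) => //; lra.
rewrite {1}/f cv_suml //.
have -> : \sum_(j < m) cv (x j 0 \o* Z j) f
    = \sum_(j < m) \sum_(k < m) x j 0 * x k 0 * V k j.
  apply: eq_bigr => j _; rewrite cvZl // cvC /f cv_suml // mulr_sumr.
  apply: eq_bigr => k _; rewrite cvZl // VE; ring.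
rewrite mxE exchange_big /=; apply: eq_bigr => k _.
rewrite mxE mulr_suml; apply: eq_bigr => j _; rewrite mxE !VE (cvC (Z k)); ring.
Qed.

End Cov.


Lemma sqrt_exists_any (R : realType) n (A : 'M[R]_n) : A^T = A ->
  (forall x : 'cV[R]_n, 0 <= (x^T *m A *m x) 0 0) ->
  exists S, psdmx S /\ S *m S = A.
Proof.
case: n A => [|n] A AT Apsd.
  exists 0; split; last by apply/matrixP => [[]].
  split; first by rewrite trmx0.
  by move=> x; rewrite mulmx0 mul0mx mxE.
have [S [ST Spsd SS]] := SqrtM.sqrt_exists AT Apsd.
by exists S.
Qed.

Lemma invmxM' (R : realType) n (A B : 'M[R]_n) : A \in unitmx -> B \in unitmx ->
  invmx (A *m B) = invmx B *m invmx A.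
Proof.
move=> Au Bu; have ABu : A *m B \in unitmx by rewrite unitmx_mul Au Bu.
transitivity (invmx B *m invmx A *m (A *m B *m invmx (A *m B))).
  by rewrite !mulmxA (mulmxKV Au) (mulVmx Bu) mul1mx.
by rewrite (mulmxV ABu) mulmx1.
Qed.

Lemma final_bound (R : realType) d (Sig Sh S W : 'M[R]_d.+1) (Z : 'cV[R]_d.+1) :
  S *m S = Sig -> S \in unitmx -> W \in unitmx ->
  opnorm (invmx S *m Sh *m invmx S - 1%:M) < 1 ->
  Sh \in unitmx /\
  eucl (invmx W *m Sig *m (invmx Sh *m Z - invmx Sig *m Z)) <=
    opnorm (invmx (invmx S *m W)) * opnorm (invmx S *m W)
    * (opnorm (invmx S *m Sh *m invmx S - 1%:M)
       / (1 - opnorm (invmx S *m Sh *m invmx S - 1%:M)))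
    * eucl (invmx W *m Sig *m (invmx Sig *m Z)).
Proof.
move=> SS Su Wu.
set A := invmx S *m Sh *m invmx S; set D := opnorm _ => D1.
have [Au Hb] := inv_bound D1.
have Siu : invmx S \in unitmx by rewrite unitmx_inv.
have ShE : Sh = S *m A *m S.
  by rewrite /A !mulmxA (mulmxV Su) mul1mx (mulmxKV Su).
have Shu : Sh \in unitmx.
  by rewrite ShE (unitmx_mul (S *m A) S) (unitmx_mul S A) Su Au.
split => //.
have Sigu : Sig \in unitmx by rewrite -SS unitmx_mul Su.
set B := invmx S *m W.
have Bu : B \in unitmx by rewrite unitmx_mul Siu Wu.
have BiE : invmx B = invmx W *m S by rewrite invmxM' // invmxK.
pose z := invmx W *m Z.
have eq1 : invmx W *m Sig *m (invmx Sh *m Z - invmx Sig *m Z)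
    = invmx B *m ((invmx A - 1%:M) *m (B *m z)).
  have SAu : S *m A \in unitmx by rewrite (unitmx_mul S A) Su Au.
  have ShiE : invmx Sh = invmx S *m invmx A *m invmx S.
    by rewrite ShE (invmxM' SAu Su) (invmxM' Su Au) mulmxA.
  have SigiE : invmx Sig = invmx S *m invmx S by rewrite -SS invmxM'.
  rewrite ShiE SigiE -SS BiE /B /z mulmxBr mulmxBl mul1mx mulmxBr !mulmxA.
  by rewrite !(mulmxK Su) !(mulmxK Wu) ?(mulmxK Su).
have eq2 : invmx W *m Sig *m (invmx Sig *m Z) = z.
  by rewrite -mulmxA (mulKVmx Sigu).
rewrite eq1 eq2.
have D0 : 0 <= D := opnorm_ge0 _.
have DD : 0 <= D / (1 - D) by rewrite divr_ge0 // subr_ge0 ltW.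
apply: le_trans (opnorm_bound _ _) _.
rewrite -!mulrA ler_wpM2l ?opnorm_ge0 //.
apply: le_trans (Hb _) _.
rewrite -/D; apply: le_trans (ler_wpM2l DD (opnorm_bound B z)) _.
rewrite le_eqVlt; apply/orP; left; apply/eqP; ring.
Qed.

Section Reg.
Context {dT : measure_display} {T : measurableType dT} {R : realType}.
Variable P : probability T R.
Variables (n dim : nat).
Variables (X : 'I_n -> T -> 'cV[R]_dim) (Y : 'I_n -> T -> R).

Lemma Zbar_eq w : Gamma_hat X Y w - Sigma_hat X w *m beta_proj P X Y = Zbar P X Y w.
Proof.
rewrite /Gamma_hat /Sigma_hat /Zbar /resid; set b := beta_proj P X Y.
rewrite -scalemxAl -scalerBr mulmx_suml -sumrB; congr (_ *: _).
apply: eq_bigr => i _; rewrite scalerBl -mulmxA.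
by congr (_ - _); rewrite {1}(mx11_scalar ((X i w)^T *m b)) mul_mx_scalar.
Qed.

Lemma psibar_eq w : psibar P X Y w = invmx (Sigma_n P X) *m Zbar P X Y w.
Proof.
rewrite /psibar /Zbar -scalemxAr mulmx_sumr; congr (_ *: _).
by apply: eq_bigr => i _; rewrite /psi scalemxAr.
Qed.

Lemma Sigma_sym : (Sigma_n P X)^T = Sigma_n P X.
Proof.
rewrite /Sigma_n linearZ /= linear_sum /=; congr (_ *: _).
apply: eq_bigr => i _; apply/matrixP => j k; rewrite !mxE.
by congr Ex; apply/funext => w; rewrite mulrC.
Qed.

End Reg.

Lemma anorm_eq (R : realType) m (Sig W : 'M[R]_m) v : Sig^T = Sig -> W^T = W ->
  W \in unitmx ->
  anorm (Sig *m invmx (W *m W) *m Sig) v = eucl (invmx W *m Sig *m v).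
Proof.
move=> SigT WT Wu; rewrite /anorm invmxM' // euclE /es.
set y := invmx W *m Sig *m v.
have -> : v^T *m (Sig *m (invmx W *m invmx W) *m Sig) *m v = y^T *m y.
  by rewrite /y !trmx_mul trmx_inv WT SigT !mulmxA.
by congr Num.sqrt; rewrite mxE; apply: eq_bigr => i _; rewrite mxE expr2.
Qed.

Theorem mainTheorem1 (dT : measure_display) (T : measurableType dT) (R : realType)
    (P : probability T R) (n dim : nat)
    (X : 'I_n -> T -> 'cV[R]_dim) (Y : 'I_n -> T -> R) :
  (* finite second moments *)
  (forall (i : 'I_n) (j : 'I_dim), (fun w => X i w j 0) \in Lfun P 2%:E) ->
  (forall i : 'I_n, Y i \in Lfun P 2%:E) ->
  (* V_n is well defined (finite): Zbar has square-integrable components *)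
  (forall j : 'I_dim, (fun w => Zbar P X Y w j 0) \in Lfun P 2%:E) ->
  Sigma_n P X \in unitmx ->
  V_n P X Y \in unitmx ->
  forall w : T,
  DSigma P X w < 1 ->
  anorm (Sigma_n P X *m invmx (V_n P X Y) *m Sigma_n P X)
        (beta_hat X Y w - beta_proj P X Y - psibar P X Y w)
  <= kappa (minvsqrt (Sigma_n P X) *m msqrt (V_n P X Y))
     * (DSigma P X w / (1 - DSigma P X w))
     * anorm (Sigma_n P X *m invmx (V_n P X Y) *m Sigma_n P X) (psibar P X Y w).
Proof.
move=> L2X L2Y L2Z Su Vu w DS1.
destruct dim as [|d].
  have v0 : forall v : 'cV[R]_0, v = 0 by move=> v; apply/matrixP => -[].
  have a0 : forall M : 'M[R]_0, anorm M 0 = 0.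
    by move=> M; rewrite /anorm mulmx0 mxE sqrtr0.
  by rewrite [psibar _ _ _ _]v0 [beta_hat _ _ _ - _ - _]v0 !a0 mulr0.
have [S SS eS] : exists2 S, S *m S = Sigma_n P X & msqrt (Sigma_n P X) = S.
  have [[S0 HS0]|nS] := pselect (exists S, psdmx S /\ S *m S = Sigma_n P X).
    exists (msqrt (Sigma_n P X)) => //.
    have : exists x, [set S : 'M[R]_d.+1 | psdmx S /\ S *m S = Sigma_n P X]%classic x.
      by exists S0.
    by move/(xgetPex 0) => [].
  exfalso.
  have e0 : msqrt (Sigma_n P X) = 0.
    by rewrite /msqrt xgetPN // => S HS; apply: nS; exists S.
  have n0 : (0 : 'M[R]_d.+1) \notin unitmx by rewrite unitmxE det0 unitr0.
  move: DS1; rewrite /DSigma /minvsqrt e0 invmx_out ?inE //.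
  rewrite mulmx0 sub0r => DS1.
  pose x : 'cV[R]_d.+1 := const_mx 1.
  have x0 : x != 0.
    by apply/eqP => /matrixP/(_ 0 0); rewrite !mxE => /eqP; rewrite oner_eq0.
  have := opnorm_bound (- 1%:M) x; rewrite mulNmx mul1mx euclN.
  have := eucl_gt0 x0; nra.
have [Vt Vpsd] := covmx_psd L2Z.
have [W0 HW0] := sqrt_exists_any Vt Vpsd.
have : exists x, [set S : 'M[R]_d.+1 | psdmx S /\ S *m S = V_n P X Y]%classic x.
  by exists W0.
move/(xgetPex 0) => [[WT _] WW].
have Sun : S \in unitmx by move: Su; rewrite -SS unitmx_mul => /andP[].
have Wun : msqrt (V_n P X Y) \in unitmx.
  have : msqrt (V_n P X Y) *m msqrt (V_n P X Y) \in unitmx by rewrite WW.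
  by rewrite unitmx_mul => /andP[].
have DE : DSigma P X w = opnorm (invmx S *m Sigma_hat X w *m invmx S - 1%:M).
  by rewrite /DSigma /minvsqrt eS.
have D1 : opnorm (invmx S *m Sigma_hat X w *m invmx S - 1%:M) < 1 by rewrite -DE.
have [Shu Hm] := @final_bound R d (Sigma_n P X) (Sigma_hat X w) S (msqrt (V_n P X Y)) (Zbar P X Y w) SS Sun Wun D1.
have eb : beta_hat X Y w - beta_proj P X Y = invmx (Sigma_hat X w) *m Zbar P X Y w.
  by rewrite -Zbar_eq mulmxBr mulKmx.
rewrite eb psibar_eq -[in invmx (V_n P X Y)]WW !anorm_eq ?Sigma_sym //.
by rewrite /kappa /minvsqrt eS DE.
Qed.
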